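(* Let $n \ge 2$ be an integer, let $1 \le \underline{x}_i < \bar{x}_i$ for $i \in \{1,2\}$, and let $\varepsilon \ge 2^{-2^{n-1}}$. Then for every $(x_1,x_2) \in [\underline{x}_1,\bar{x}_1] \times [\underline{x}_2,\bar{x}_2]$, the set of $\varepsilon$-feasible follower's solutions of the lower-level problem $$\max_{y \in \mathbb{R}^{n+2}} \; y_1 - y_n\,(x_1 + x_2 - y_{n+1} - y_{n+2})$$ subject to $y_1 + y_n = \tfrac12$, $y_i^2 \le y_{i+1}$ for $i \in \{1,\dots,n-1\}$, $y_i \ge 0$ for $i \in \{1,\dots,n\}$, $y_{n+1} \in [0,x_1]$, $y_{n+2} \in [-x_2,x_2]$, is not a singleton.
   Context: For $\varepsilon>0$, a point is $\varepsilon$-feasible for this lower-level problem if it satisfies all linear constraints ($y_1+y_n=\tfrac12$, $y_i\ge0$ for $i\le n$, the bounds on $y_{n+1},y_{n+2}$) exactly and satisfies $y_i^2 - y_{i+1} \le \varepsilon$ for all $i \in \{1,\dots,n-1\}$. An $\varepsilon$-feasible follower's solution (for given $x$) is an $\varepsilon$-feasible point that maximizes the lower-level objective over all $\varepsilon$-feasible points. *)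

(* Defs.v *)
From HB Require Import structures.
From mathcomp Require Import all_boot all_order all_algebra.
From mathcomp Require Import reals.
Set Implicit Arguments. Unset Strict Implicit. Unset Printing Implicit Defensive.
Import Order.TTheory GRing.Theory Num.Theory.
Local Open Scope ring_scope.

(* A point y in R^(n+2) is a row vector 'rV[R]_(n.+2); the paper's 1-based
   coordinate y_k (1 <= k <= n+2) is [coord y k] = y 0 (k-1). *)
Definition coord (R : realType) (n : nat) (y : 'rV[R]_(n.+2)) (k : nat) : R :=
  y ord0 (inord k.-1).

Definition eps_feasible (R : realType) (n : nat) (x1 x2 eps : R)
    (y : 'rV[R]_(n.+2)) : Prop :=
  [/\ coord y 1 + coord y n = 1 / 2,
      (forall i : nat, (1 <= i <= n)%N -> 0 <= coord y i),
      0 <= coord y n.+1 <= x1,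
      - x2 <= coord y n.+2 <= x2
    & (forall i : nat, (1 <= i <= n.-1)%N ->
          coord y i ^+ 2 - coord y i.+1 <= eps)].

Definition ll_objective (R : realType) (n : nat) (x1 x2 : R)
    (y : 'rV[R]_(n.+2)) : R :=
  coord y 1 - coord y n * (x1 + x2 - coord y n.+1 - coord y n.+2).

Definition eps_follower_solution (R : realType) (n : nat) (x1 x2 eps : R)
    (y : 'rV[R]_(n.+2)) : Prop :=
  @eps_feasible R n x1 x2 eps y /\
  (forall z : 'rV[R]_(n.+2), @eps_feasible R n x1 x2 eps z ->
     @ll_objective R n x1 x2 z <= @ll_objective R n x1 x2 y).

(* Main.v *)
Require Import Defs.
From HB Require Import structures.
From mathcomp Require Import all_boot all_order all_algebra.
From mathcomp Require Import reals.
From mathcomp Require Import ring lra zify.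
Import Order.TTheory GRing.Theory Num.Theory.
Local Open Scope ring_scope.

Definition gv (R : realType) (n : nat) (a x2 : R) (j : nat) : R :=
  if (j.+1 <= n.-1)%N then (2^-1) ^+ (2 ^ j)%N
  else if j.+1 == n then 0 else if j.+1 == n.+1 then a else x2.
Arguments gv {R}.

Definition vv (R : realType) (n : nat) (a x2 : R) : 'rV[R]_(n.+2) :=
  \row_(j < n.+2) gv n a x2 j.
Arguments vv {R}.

Lemma coord_vv (R : realType) (n : nat) (a x2 : R) k :
  (1 <= k <= n.+2)%N -> @Defs.coord R n (vv n a x2) k = gv n a x2 k.-1.
Proof.
move=> /andP[h1 h2]; rewrite /Defs.coord /vv mxE inordK //.
by case: k h1 h2 => //= k _ h; rewrite ltnS.
Qed.

Lemma vv_feas (R : realType) (n : nat) (x1 x2 eps a : R) :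
  (2 <= n)%N -> 1 <= x2 -> 0 <= a <= x1 ->
  (2 : R) ^- (2 ^ n.-1)%N <= eps -> @eps_feasible R n x1 x2 eps (vv n a x2).
Proof.
case: n => [|[|m]] // _ hx2 ha he.
have hpos : forall m, 0 <= (2^-1 : R) ^+ m by move=> k; apply: exprn_ge0; rewrite invr_ge0.
have he0 : 0 <= eps by apply: le_trans he; rewrite invr_ge0 exprn_ge0.
split.
- rewrite !coord_vv /gv //=; last by rewrite ltnW // ltnW.
  rewrite ltnn eqxx expr1.
  by rewrite addr0 div1r.
- move=> i /andP[i1 i2]; rewrite coord_vv; last by rewrite i1 /= (leq_trans i2) // leqW // leqW.
  rewrite /gv; case: ifP => _ //; case: ifP => _ //.
  have -> : (i.-1.+1 == m.+3) = false by rewrite prednK //; apply/negbTE; rewrite neq_ltn ltnS i2.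
  lra.
- rewrite coord_vv //= /gv /= eqxx.
  rewrite (_ : (m.+3 <= m.+1)%N = false); last by lia.
  by rewrite (_ : (m.+3 == m.+2) = false) //; apply/negbTE; rewrite neq_ltn ltnSn orbT.
- rewrite coord_vv //= /gv.
  rewrite (_ : (m.+4 <= m.+1)%N = false); last by lia.
  rewrite (_ : (m.+4 == m.+2) = false); last by lia.
  rewrite (_ : (m.+4 == m.+3) = false); last by lia.
  apply/andP; split; lra.
- move=> i /andP[i1 i2].
  rewrite !coord_vv; try lia.
  rewrite /gv /= prednK // i2.
  case: ifP => hi.
  + rewrite -exprM -expnSr prednK // subrr //.
  + have hi' : i = m.+1 by move/negbT: hi; lia.
    rewrite hi' eqxx subr0 -exprM -expnSr exprVn //.
Qed.
Arguments vv_feas {R n x1 x2 eps a}.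

Lemma vv_opt (R : realType) (n : nat) (x1 x2 eps a : R) :
  (2 <= n)%N -> 1 <= x2 -> 0 <= a <= x1 ->
  (2 : R) ^- (2 ^ n.-1)%N <= eps -> @eps_follower_solution R n x1 x2 eps (vv n a x2).
Proof.
move=> hn hx2 ha he; split; first exact: vv_feas.
have [e1 _ _ _ _] := vv_feas hn hx2 ha he.
move=> z [z1 z2 z3 z4 _].
have hz : 0 <= Defs.coord z n by apply: z2; lia.
have vn : Defs.coord (vv n a x2) n = 0.
  rewrite coord_vv; last by lia.
  rewrite /gv prednK; last by lia.
  rewrite (_ : (n <= n.-1)%N = false) ?eqxx //; lia.
rewrite /ll_objective vn mul0r subr0.
have h1 : Defs.coord (vv n a x2) 1 = 1/2 by rewrite -e1 vn addr0.
rewrite h1.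
move: z3 z4 => /andP[_ z3] /andP[_ z4].
have : 0 <= Defs.coord z n * (x1 + x2 - Defs.coord z n.+1 - Defs.coord z n.+2).
  apply: mulr_ge0 => //; lra.
lra.
Qed.
Arguments vv_opt {R n x1 x2 eps a}.

Theorem mainTheorem5 (R : realType) (n : nat) (xl1 xu1 xl2 xu2 eps : R) :
  (2 <= n)%N ->
  1 <= xl1 -> xl1 < xu1 ->
  1 <= xl2 -> xl2 < xu2 ->
  (2 : R) ^- (2 ^ n.-1)%N <= eps ->
  forall x1 x2 : R, xl1 <= x1 <= xu1 -> xl2 <= x2 <= xu2 ->
    ~ (exists y0 : 'rV[R]_(n.+2),
         forall y : 'rV[R]_(n.+2),
           @eps_follower_solution R n x1 x2 eps y <-> y = y0).
Proof.
move=> hn h1 _ h2 _ he x1 x2 /andP[hx1 _] /andP[hx2 _] [y0 hy].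
have ha0 : 0 <= (0:R) <= x1 by apply/andP; split; lra.
have ha1 : 0 <= x1 <= x1 by apply/andP; split; lra.
have e0 := (hy _).1 (vv_opt hn (le_trans h2 hx2) ha0 he).
have e1 := (hy _).1 (vv_opt hn (le_trans h2 hx2) ha1 he).
have : Defs.coord (vv n 0 x2) n.+1 = Defs.coord (vv n x1 x2) n.+1 by rewrite e0 e1.
rewrite !coord_vv; try lia.
rewrite /gv /= eqxx (_ : (n.+1 <= n.-1)%N = false); last by lia.
rewrite (_ : (n.+1 == n) = false); last by lia.
lra.
Qed.
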